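(* Let $U=(U_{ij})_{i,j=1}^M$ with $U_{ij}\in M_M(\mathbb C)$ and $V=(V_{ab})_{a,b=1}^N$ with $V_{ab}\in M_N(\mathbb C)$ be projective models, and let $Q\in M_{M\times N}(\mathbb T)$ be arbitrary. Then the matrix $W=U\otimes_QV$, given by $$(W_{ia,jb})_{kc,ld}=\frac{Q_{ic}Q_{jd}}{Q_{id}Q_{jc}}(U_{ij})_{kl}(V_{ab})_{cd},$$ is a projective model, i.e. both $W$ and $W'$ are magic.
   Context: A square matrix with entries in a $C^*$-algebra is magic if its entries are orthogonal projections and each row and each column sums to $1$. For $U=(U_{ij})_{i,j=1}^n$ with $U_{ij}\in M_n(\mathbb C)$, $U'$ is defined by $(U'_{kl})_{ij}=(U_{ij})_{kl}$. $U$ is a projective model if $U$ and $U'$ are both magic. In the formula, $i,j,k,l\in\{1,\dots,M\}$, $a,b,c,d\in\{1,\dots,N\}$, and $W$ is the $MN\times MN$ matrix with entries $W_{ia,jb}\in M_{MN}(\mathbb C)$. *)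

(* Defs.v *)
From HB Require Import structures.
From mathcomp Require Import all_boot all_order all_algebra.
From mathcomp Require Import complex.
From mathcomp Require Import Rstruct.
Set Implicit Arguments. Unset Strict Implicit. Unset Printing Implicit Defensive.
Import Order.TTheory GRing.Theory Num.Theory.
Local Open Scope ring_scope.

Definition C : Type := (Rdefinitions.R)[i].

Definition adjmx (m n : nat) (A : 'M[C]_(m, n)) : 'M[C]_(n, m) :=
  \matrix_(i, j) (A j i)^*.

Definition orth_proj (n : nat) (P : 'M[C]_n) : Prop :=
  P *m P = P /\ adjmx P = P.

Definition magic (m n : nat) (U : 'I_m -> 'I_m -> 'M[C]_n) : Prop :=
  [/\ forall i j, orth_proj (U i j),
      forall i, \sum_j U i j = 1%:M
    & forall j, \sum_i U i j = 1%:M].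

Definition prime_mx (n : nat) (U : 'I_n -> 'I_n -> 'M[C]_n) :
  'I_n -> 'I_n -> 'M[C]_n :=
  fun k l => \matrix_(i, j) U i j k l.

Definition projective_model (n : nat) (U : 'I_n -> 'I_n -> 'M[C]_n) : Prop :=
  magic U /\ magic (prime_mx U).

(* Main.v *)
Require Import Defs.
From HB Require Import structures.
From mathcomp Require Import all_boot all_order all_algebra.
From mathcomp Require Import complex.
From mathcomp Require Import Rstruct.
From mathcomp Require Import ring.
Import Order.TTheory GRing.Theory Num.Theory.
Local Open Scope ring_scope.
Set Implicit Arguments. Unset Strict Implicit.

Section Helpers.
Variables M N : nat.

Lemma sum_mxvec (F : 'I_(M * N) -> C) :
  \sum_x F x = \sum_i \sum_a F (mxvec_index i a).
Proof.
rewrite (reindex (uncurry (@mxvec_index M N))) /=; last first.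
  have [g g1 g2] := curry_mxvec_bij M N.
  by exists g => x _; [apply: g1 | apply: g2].
by rewrite pair_big /=; apply: eq_bigr => -[i a].
Qed.

Lemma mxvec_index_eq (k l : 'I_M) (c d : 'I_N) :
  (mxvec_index k c == mxvec_index l d) = (k == l) && (c == d).
Proof.
apply/eqP/andP => [|[/eqP -> /eqP ->] //].
move/(congr1 (cast_ord (esym (mxvec_cast M N)))); rewrite !cast_ordK.
by move/enum_rank_inj => [-> ->].
Qed.

Variable Q : 'M[C]_(M, N).
Hypothesis HQ : forall i c, `|Q i c| = 1.

Definition qf i j c d := Q i c * Q j d / (Q i d * Q j c).

Lemma Q0 i c : Q i c != 0.
Proof. by rewrite -normr_eq0 HQ oner_eq0. Qed.

Lemma Qc i c : (Q i c)^* = (Q i c)^-1.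
Proof. by rewrite invC_norm HQ expr1n invr1 mul1r. Qed.

Lemma qf_ii i c d : qf i i c d = 1.
Proof. by rewrite /qf [Q i d * _]mulrC divff // mulf_neq0 ?Q0. Qed.

Lemma qf_cc i j c : qf i j c c = 1.
Proof. by rewrite /qf divff // mulf_neq0 ?Q0. Qed.

Lemma qf_mul1 i j c e d : qf i j c e * qf i j e d = qf i j c d.
Proof. rewrite /qf; field; by rewrite !Q0. Qed.

Lemma qf_mul2 i j m c d : qf i j c d * qf j m c d = qf i m c d.
Proof. rewrite /qf; field; by rewrite !Q0. Qed.

Lemma qf_conj1 i j c d : (qf i j d c)^* = qf i j c d.
Proof.
rewrite /qf !(rmorphM, fmorphV) /= !Qc; field; by rewrite !Q0.
Qed.

Lemma qf_conj2 i j c d : (qf j i c d)^* = qf i j c d.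
Proof.
rewrite /qf !(rmorphM, fmorphV) /= !Qc; field; by rewrite !Q0.
Qed.

End Helpers.

Section PM.
Variables (n : nat) (U : 'I_n -> 'I_n -> 'M[C]_n).
Hypothesis HU : projective_model U.

Lemma pm_UU i j k m : \sum_l U i j k l * U i j l m = U i j k m.
Proof. by have [[/(_ i j) [/matrixP /(_ k m) + _] _ _] _] := HU; rewrite mxE. Qed.

Lemma pm_Uadj i j k l : (U i j l k)^* = U i j k l.
Proof. by have [[/(_ i j) [_ /matrixP /(_ k l) +] _ _] _] := HU; rewrite mxE. Qed.

Lemma pm_Urow i k l : \sum_j U i j k l = (k == l)%:R.
Proof. by have [[_ /(_ i) /matrixP /(_ k l) + _] _] := HU; rewrite summxE mxE. Qed.

Lemma pm_Ucol j k l : \sum_i U i j k l = (k == l)%:R.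
Proof. by have [[_ _ /(_ j) /matrixP /(_ k l) +] _] := HU; rewrite summxE mxE. Qed.

Lemma pm_U'U' k l i m : \sum_j U i j k l * U j m k l = U i m k l.
Proof.
have [_ [/(_ k l) [/matrixP /(_ i m) + _] _ _]] := HU.
by rewrite /prime_mx !mxE; under eq_bigr do rewrite !mxE.
Qed.

Lemma pm_U'adj k l i j : (U j i k l)^* = U i j k l.
Proof.
have [_ [/(_ k l) [_ /matrixP /(_ i j) +] _ _]] := HU.
by rewrite /prime_mx !mxE.
Qed.

Lemma pm_U'row k i j : \sum_l U i j k l = (i == j)%:R.
Proof.
have [_ [_ /(_ k) /matrixP /(_ i j) + _]] := HU.
by rewrite summxE mxE /prime_mx; under eq_bigr do rewrite mxE.
Qed.

Lemma pm_U'col l i j : \sum_k U i j k l = (i == j)%:R.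
Proof.
have [_ [_ _ /(_ l) /matrixP /(_ i j) +]] := HU.
by rewrite summxE mxE /prime_mx; under eq_bigr do rewrite mxE.
Qed.

End PM.

Unset Implicit Arguments. Set Strict Implicit.

Theorem proposition2p4 (M N : nat)
  (U : 'I_M -> 'I_M -> 'M[C]_M) (V : 'I_N -> 'I_N -> 'M[C]_N)
  (Q : 'M[C]_(M, N))
  (W : 'I_(M * N) -> 'I_(M * N) -> 'M[C]_(M * N)) :
  projective_model U -> projective_model V ->
  (forall i c, `|Q i c| = 1) ->
  (forall (i j k l : 'I_M) (a b c d : 'I_N),
     W (mxvec_index i a) (mxvec_index j b) (mxvec_index k c) (mxvec_index l d)
     = Q i c * Q j d / (Q i d * Q j c) * U i j k l * V a b c d) ->
  projective_model W.
Proof.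
move=> HU HV HQ HW0.
have HW : forall i j k l a b c d,
  W (mxvec_index i a) (mxvec_index j b) (mxvec_index k c) (mxvec_index l d)
     = qf Q i j c d * U i j k l * V a b c d by [].
clear HW0.
split; split.
- move=> x y; case/mxvec_indexP: x => i a; case/mxvec_indexP: y => j b; split.
    apply/matrixP => x z; case/mxvec_indexP: x => k c; case/mxvec_indexP: z => m d.
    rewrite mxE sum_mxvec HW.
    under eq_bigr do under eq_bigr do rewrite !HW.
    rewrite -(pm_UU HU i j k m) -(pm_UU HV a b c d) -mulrA big_distrlr mulr_sumr.
    apply: eq_bigr => l _; rewrite mulr_sumr; apply: eq_bigr => e _.
    rewrite -(qf_mul1 HQ i j c e d) /=; ring.
  apply/matrixP => x z; case/mxvec_indexP: x => k c; case/mxvec_indexP: z => l d.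
  by rewrite mxE !HW rmorphM rmorphM /= qf_conj1 // (pm_Uadj HU) (pm_Uadj HV).
- move=> x; case/mxvec_indexP: x => i a.
  apply/matrixP => x z; case/mxvec_indexP: x => k c; case/mxvec_indexP: z => l d.
  rewrite summxE sum_mxvec mxE mxvec_index_eq.
  under eq_bigr do under eq_bigr do rewrite HW.
  under eq_bigr do rewrite -mulr_sumr (pm_Urow HV).
  case: eqVneq => [<-|ne].
    under eq_bigr do rewrite qf_cc // mul1r mulr1.
    by rewrite (pm_Urow HU) andbT.
  by rewrite andbF big1 // => j _; rewrite mulr0.
- move=> y; case/mxvec_indexP: y => j b.
  apply/matrixP => x z; case/mxvec_indexP: x => k c; case/mxvec_indexP: z => l d.
  rewrite summxE sum_mxvec mxE mxvec_index_eq.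
  under eq_bigr do under eq_bigr do rewrite HW.
  under eq_bigr do rewrite -mulr_sumr (pm_Ucol HV).
  case: eqVneq => [<-|ne].
    under eq_bigr do rewrite qf_cc // mul1r mulr1.
    by rewrite (pm_Ucol HU) andbT.
  by rewrite andbF big1 // => i _; rewrite mulr0.
- move=> x y; case/mxvec_indexP: x => k c; case/mxvec_indexP: y => l d; split.
    apply/matrixP => x z; case/mxvec_indexP: x => i a; case/mxvec_indexP: z => m e.
    rewrite /prime_mx !mxE sum_mxvec HW.
    under eq_bigr do under eq_bigr do rewrite !mxE !HW.
    rewrite -(pm_U'U' HU k l i m) -(pm_U'U' HV c d a e) -mulrA big_distrlr mulr_sumr.
    apply: eq_bigr => j _; rewrite mulr_sumr; apply: eq_bigr => b _.
    rewrite -(qf_mul2 HQ i j m c d) /=; ring.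
  apply/matrixP => x z; case/mxvec_indexP: x => i a; case/mxvec_indexP: z => j b.
  rewrite /prime_mx !mxE !HW rmorphM rmorphM /= qf_conj2 //.
  by rewrite (pm_U'adj HU) (pm_U'adj HV).
- move=> x; case/mxvec_indexP: x => k c.
  apply/matrixP => x z; case/mxvec_indexP: x => i a; case/mxvec_indexP: z => j b.
  rewrite summxE sum_mxvec [in RHS]mxE mxvec_index_eq /prime_mx.
  under eq_bigr do under eq_bigr do rewrite mxE HW mulrAC.
  rewrite exchange_big /=.
  under eq_bigr do rewrite -mulr_sumr (pm_U'row HU).
  case: eqVneq => [<-|ne].
    under eq_bigr do rewrite qf_ii // mul1r mulr1.
    by rewrite (pm_U'row HV).
  by rewrite big1 // => d _; rewrite mulr0.
- move=> y; case/mxvec_indexP: y => l d.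
  apply/matrixP => x z; case/mxvec_indexP: x => i a; case/mxvec_indexP: z => j b.
  rewrite summxE sum_mxvec [in RHS]mxE mxvec_index_eq /prime_mx.
  under eq_bigr do under eq_bigr do rewrite mxE HW mulrAC.
  rewrite exchange_big /=.
  under eq_bigr do rewrite -mulr_sumr (pm_U'col HU).
  case: eqVneq => [<-|ne].
    under eq_bigr do rewrite qf_ii // mul1r mulr1.
    by rewrite (pm_U'col HV).
  by rewrite big1 // => c _; rewrite mulr0.
Qed.
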